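(* Let $n\ge 1$ and $l$ be integers, and fix a linear ordering of $\{E,D,N\}$. Let $BDel(n,n,l)$ be the set of paths in $Del(n,n,l)$ that go strictly above the line $y=x$ at some point. Then $$\sum_{W\in BDel(n,n,l)} q^{\mathrm{maj}(W)} = q\sum_{W\in Del(n+1,n-1,l)} q^{\mathrm{maj}(W)}\quad\text{if } E<N,$$ and $$\sum_{W\in BDel(n,n,l)} q^{\mathrm{maj}(W)} = \sum_{W\in Del(n+1,n-1,l)} q^{\mathrm{maj}(W)}\quad\text{if } E>N.$$ Equivalently, there is a bijection $\varphi:BDel(n,n,l)\to Del(n+1,n-1,l)$ with $\mathrm{maj}(W)=\mathrm{maj}(\varphi(W))+1$ for all $W$ if $E<N$, and $\mathrm{maj}(W)=\mathrm{maj}(\varphi(W))$ for all $W$ if $E>N$.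
   Context: A Delannoy path from $(0,0)$ to $(m,n)$ is a lattice path using only the steps $E=(1,0)$, $D=(1,1)$, $N=(0,1)$; a path with $l$ steps is identified with the word $W=w_1w_2\cdots w_l$ over the alphabet $\{E,D,N\}$. $Del(m,n,l)$ denotes the set of Delannoy paths from $(0,0)$ to $(m,n)$ with exactly $l$ steps. Given a linear ordering of $\{E,D,N\}$, an index $i$ with $1\le i\le l-1$ is a descent of $W$ if $w_i>w_{i+1}$, and $\mathrm{maj}(W)=\sum_{i \text{ descent}} i$. *)

(* Defs.v *)
From HB Require Import structures.
From mathcomp Require Import all_boot all_order all_algebra.
Set Implicit Arguments. Unset Strict Implicit. Unset Printing Implicit Defensive.
Import GRing.Theory.

(* Steps of a Delannoy path: E = (1,0), D = (1,1), N = (0,1). *)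
Inductive step := E | D | N.

Definition step_to (s : step) : 'I_3 :=
  match s with E => inord 0 | D => inord 1 | N => inord 2 end.
Definition step_of (i : 'I_3) : step :=
  match val i with 0 => E | 1 => D | _ => N end.
Lemma step_toK : cancel step_to step_of.
Proof. by case; rewrite /step_to /step_of /= inordK. Qed.
HB.instance Definition _ := Finite.copy step (can_type step_toK).

(* A path with l steps is a word (l-tuple) over {E,D,N}. *)
Definition xcoord (w : seq step) : nat := count (fun s => s != N) w.
Definition ycoord (w : seq step) : nat := count (fun s => s != E) w.

Definition Del (m n l : nat) : {set l.-tuple step} :=
  [set W : l.-tuple step | (xcoord W == m) && (ycoord W == n)].

Definition goes_above (w : seq step) : bool :=
  [exists i : 'I_(size w).+1, xcoord (take i w) < ycoord (take i w)].

Definition BDel (n l : nat) : {set l.-tuple step} :=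
  [set W in Del n n l | goes_above W].

(* A linear ordering of {E,D,N} is given by an injective rank function rk:
   a < b iff rk a < rk b.  maj(W) = sum of the (1-based) descent positions. *)
Definition maj (rk : step -> nat) (w : seq step) : nat :=
  \sum_(i < (size w).-1 | rk (nth E w i) > rk (nth E w i.+1)) i.+1.

(* Main.v *)
Require Import Defs.
From mathcomp Require Import all_boot all_order all_algebra ring lra zify.
Import GRing.Theory.
Local Open Scope ring_scope.

Lemma EDf : (E == D) = false. Proof. by apply/eqP. Qed.
Lemma ENf : (E == N) = false. Proof. by apply/eqP. Qed.
Lemma DEf : (D == E) = false. Proof. by apply/eqP. Qed.
Lemma DNf : (D == N) = false. Proof. by apply/eqP. Qed.
Lemma NEf : (N == E) = false. Proof. by apply/eqP. Qed.
Lemma NDf : (N == D) = false. Proof. by apply/eqP. Qed.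
Definition stepE := (eqxx, EDf, ENf, DEf, DNf, NEf, NDf).

Definition steps := [:: E; D; N].

Fixpoint words n : seq (seq step) :=
  if n is n'.+1 then [seq rcons w c | w <- words n', c <- steps] else [:: [::]].

Lemma words_S n : words n.+1 = [seq rcons w c | w <- words n, c <- steps].
Proof. by []. Qed.

Lemma mem_words n w : (w \in words n) = (size w == n).
Proof.
elim: n w => [|n IH] w; first by rewrite inE; case: w.
rewrite words_S; apply/allpairsP/idP.
  by case=> [[w' c] [h1 h2 ->]]; rewrite size_rcons eqSS -IH.
case/lastP: w => [//|w c]; rewrite size_rcons eqSS -IH => h.
by exists (w, c); split => //; case: c; rewrite !inE ?stepE ?orbT.
Qed.

Lemma uniq_words n : uniq (words n).
Proof.
elim: n => // n IH; rewrite words_S; apply: allpairs_uniq => //; first by rewrite /= !inE !stepE.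
by move=> [a b] [c d] _ _ /= /rcons_inj [-> ->].
Qed.

Lemma sum_words_rcons (F : seq step -> {poly int}) n (P : pred (seq step)) :
  \sum_(w <- words n.+1 | P w) F w =
  \sum_(w <- words n) \sum_(c <- steps | P (rcons w c)) F (rcons w c).
Proof.
rewrite big_mkcond words_S big_allpairs_dep; apply: eq_bigr => w _.
by rewrite [RHS]big_mkcond.
Qed.

Lemma maj_rcons rk w c : maj rk (rcons w c) =
  (maj rk w + (if rk c < rk (last E w) then size w else 0))%N.
Proof.
rewrite /maj size_rcons /=.
case: w => [|a w]; first by rewrite !big_ord0; case: ifP.
have hs : size (a :: w) = (size w).+1 by [].
rewrite hs /= big_mkcond big_ord_recr /= [X in (_ = X + _)%N]big_mkcond.
congr (_ + _)%N.
  apply: eq_bigr => i _.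
  rewrite !nth_rcons (ltn_ord i).
  rewrite -[nth E (a :: rcons w c) i]/(nth E (rcons (a :: w) c) i).
  by rewrite nth_rcons hs (leqW (ltn_ord i)).
rewrite nth_rcons ltnn eqxx.
rewrite -[nth E (a :: rcons w c) (size w)]/(nth E (rcons (a :: w) c) (size w)).
rewrite nth_rcons hs ltnSn.
have -> : nth E (a :: w) (size w) = last a w.
  by elim: w {hs} a => //= b w IH a; exact: IH.
by [].
Qed.

Lemma xcoord_cnt w : xcoord w = (count_mem E w + count_mem D w)%N.
Proof.
rewrite /xcoord; elim: w => //= s w ->; case: s; rewrite /= ?stepE /=; lia.
Qed.
Lemma ycoord_cnt w : ycoord w = (count_mem N w + count_mem D w)%N.
Proof.
rewrite /ycoord; elim: w => //= s w ->; case: s; rewrite /= ?stepE /=; lia.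
Qed.
Lemma size_cnt w : size w = (count_mem E w + count_mem D w + count_mem N w)%N.
Proof.
elim: w => //= s w ->; case: s; rewrite /= ?stepE /=; lia.
Qed.

Definition cont (k : step -> nat) (w : seq step) :=
  [&& count_mem E w == k E, count_mem D w == k D & count_mem N w == k N].
Definition dec (k : step -> nat) (c : step) : step -> nat :=
  fun s => if s == c then (k s).-1 else k s.

Lemma cont_rcons k w c : cont k (rcons w c) = (0 < k c)%N && cont (dec k c) w.
Proof.
rewrite /cont /dec -cats1 !count_cat /=.
case: c; rewrite !stepE /= !addn0.
- by case: (k E) => [|m]; rewrite addn1 ?eqSS //= andbF.
- by case: (k D) => [|m]; rewrite addn1 ?eqSS //= andbF.
- by case: (k N) => [|m]; rewrite addn1 ?eqSS //= !andbF.
Qed.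

Lemma goes_aboveE w : goes_above w =
  has (fun i => xcoord (take i w) < ycoord (take i w))%N (iota 0 (size w).+1).
Proof.
apply/existsP/hasP => [[i h]|[i hi h]].
  by exists (val i) => //; rewrite mem_iota add0n ltn_ord.
have hi' : (i < (size w).+1)%N by move: hi; rewrite mem_iota add0n.
by exists (Ordinal hi').
Qed.

Lemma goes_above_rcons w c : goes_above (rcons w c) =
  goes_above w || (xcoord (rcons w c) < ycoord (rcons w c))%N.
Proof.
rewrite !goes_aboveE size_rcons -[(size w).+2]addn1 iotaD add0n has_cat.
rewrite (_ : iota (size w).+1 1 = [:: (size w).+1]) // has_seq1.
rewrite (take_oversize (n := (size w).+1)) ?size_rcons //; congr (_ || _).
apply: eq_in_has => i; rewrite mem_iota add0n ltnS => /andP [_ hi].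
rewrite -cats1 take_cat; case: ifP => // /negbT; rewrite -leqNgt => h.
have -> : i = size w by apply/eqP; rewrite eqn_leq hi h.
by rewrite subnn take0 cats0 take_size.
Qed.

Lemma above_end k w : cont k w -> (k E < k N)%N -> goes_above w.
Proof.
move=> /and3P [/eqP h1 /eqP h2 /eqP h3] h; rewrite goes_aboveE.
apply/hasP; exists (size w); first by rewrite mem_iota add0n leq0n ltnSn.
by rewrite take_size xcoord_cnt ycoord_cnt h1 h2 h3 ltn_add2r.
Qed.

Lemma noN w : count_mem N w = 0%N -> ~~ goes_above w.
Proof.
move=> hN; rewrite goes_aboveE; apply/hasP => [[i _]].
have : count_mem N (take i w) = 0%N.
  by have := count_cat (pred1 N) (take i w) (drop i w); rewrite cat_take_drop; lia.
by rewrite xcoord_cnt ycoord_cnt => ->; lia.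
Qed.

Lemma not_above_end k w : cont k w -> (k N <= k E)%N ->
  (xcoord w < ycoord w)%N = false.
Proof.
move=> /and3P [/eqP h1 /eqP h2 /eqP h3] h.
rewrite xcoord_cnt ycoord_cnt h1 h2 h3; apply/negbTE; rewrite -leqNgt; lia.
Qed.

Definition Hp (rk : step -> nat) n (k : step -> nat) c (P : pred (seq step)) :
    {poly int} :=
  \sum_(w <- words n | [&& cont k w, last E w == c & P w]) 'X^(maj rk w).

Lemma split_last (s : seq (seq step)) (Q : pred (seq step))
    (G : seq step -> {poly int}) :
  \sum_(w <- s | Q w) G w =
  \sum_(c' <- steps) \sum_(w <- s | Q w && (last E w == c')) G w.
Proof.
under [RHS]eq_bigr => c' _ do rewrite big_mkcondr.
rewrite exchange_big /=; apply: eq_bigr => w _.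
rewrite !big_cons big_nil.
by case: (last E w); rewrite !stepE ?addr0 ?add0r.
Qed.

Lemma Hp_rec rk n k c P :
  (forall w c0, cont k (rcons w c0) -> P (rcons w c0) = P w) ->
  Hp rk n.+1 k c P =
  if (0 < k c)%N then
    \sum_(c' <- steps) (if (rk c < rk c')%N then 'X^n else 1) *
                       Hp rk n (dec k c) c' P
  else 0.
Proof.
move=> hP; rewrite /Hp sum_words_rcons.
have hinn : forall w : seq step, w \in words n ->
  \sum_(c0 <- steps | [&& cont k (rcons w c0), last E (rcons w c0) == c
                        & P (rcons w c0)]) 'X^(maj rk (rcons w c0)) =
  (if [&& (0 < k c)%N, cont (dec k c) w & P w] then
    'X^(maj rk w) * (if (rk c < rk (last E w))%N then 'X^n else 1) else 0) :> {poly int}.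
  move=> w hw; have sw : size w = n by apply/eqP; rewrite -mem_words.
  have key : [&& cont k (rcons w c), true & P (rcons w c)] =
             [&& (0 < k c)%N, cont (dec k c) w & P w].
    case h: (cont k (rcons w c)).
      by rewrite (hP _ _ h) [RHS]andbA -cont_rcons h.
    by rewrite [RHS]andbA -cont_rcons h.
  have mj : 'X^(maj rk (rcons w c)) =
     'X^(maj rk w) * (if (rk c < rk (last E w))%N then 'X^n else 1) :> {poly int}.
    by rewrite maj_rcons exprD sw; case: ifP; rewrite ?expr0.
  rewrite !big_cons big_nil !last_rcons.
  case: c key mj; rewrite !stepE /= ?andbF ?addr0 ?add0r;
    by move=> -> ->.
rewrite big_seq (eq_bigr _ hinn) -big_seq.
case: (ltnP 0 (k c)) => hk; last first.
  by rewrite big1 // => w _; rewrite ltnNge hk.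
rewrite -big_mkcond /= split_last.
apply: eq_bigr => c' _; rewrite mulr_sumr.
rewrite big_seq_cond [RHS]big_seq_cond.
apply: eq_big => [w|w /and3P [_ _ /eqP ->]]; last by rewrite mulrC.
by case: (w \in words n); case: (cont _ w); case: (P w); case: (last E w == c').
Qed.

Import Num.Theory.
Fixpoint qf n : {poly int} := if n is m.+1 then 1 + 'X * qf m else 0.
Fixpoint qfact n : {poly int} := if n is m.+1 then qfact m * qf m.+1 else 1.
Definition Pi (k : step -> nat) := qfact (k E) * qfact (k D) * qfact (k N).
Definition Ltot (k : step -> nat) := (k E + k D + k N)%N.
Definition gt (rk : step -> nat) (k : step -> nat) c :=
  ((if rk c < rk E then k E else 0) + (if rk c < rk D then k D else 0)
   + (if rk c < rk N then k N else 0))%N.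

Lemma qfE n : qf n * (1 - 'X) = 1 - 'X^n.
Proof.
elim: n => [|n IH] /=; first by rewrite mul0r expr0 subrr.
by rewrite mulrDl -mulrA IH exprS; ring.
Qed.

Lemma nz1X : (1 - 'X : {poly int}) != 0.
Proof.
apply/eqP => h; have := congr1 (horner^~ 0) h.
by rewrite !hornerE /= => /eqP; rewrite oner_eq0.
Qed.

Lemma qf1 n : (qf n).[1] = n%:R.
Proof. elim: n => [|n IH] /=; first by rewrite horner0.
by rewrite !hornerE IH mulrS. Qed.

Lemma qfact1 n : (qfact n).[1] = (n`!)%:R.
Proof.
elim: n => [|n IH]; first by rewrite /= hornerE.
have -> : qfact n.+1 = qfact n * qf n.+1 by [].
by rewrite hornerM IH qf1 factS natrM mulrC.
Qed.

Lemma nz_at1 (p : {poly int}) : p.[1] != 0 -> p != 0.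
Proof. by apply: contraNneq => ->; rewrite horner0. Qed.

Lemma qfact_nz n : qfact n != 0.
Proof. by apply: nz_at1; rewrite qfact1 pnatr_eq0 -lt0n fact_gt0. Qed.

Lemma qf_nz n : (0 < n)%N -> qf n != 0.
Proof. by move=> hn; apply: nz_at1; rewrite qf1 pnatr_eq0 -lt0n. Qed.

Lemma Pi_nz k : Pi k != 0.
Proof. by rewrite /Pi !mulf_neq0 // qfact_nz. Qed.

Lemma flipF {a b} : (a < b)%N -> (b < a)%N = false.
Proof. by move=> h; rewrite ltnNge ltnW. Qed.

Lemma KI rk (rk_inj : injective rk) b c :
  \sum_(c' <- steps) (if (rk c < rk c')%N then 'X^(Ltot b) else 1) *
     ('X^(gt rk b c') * qf (b c')) = 'X^(gt rk b c) * qf (Ltot b).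
Proof.
apply: (mulIf nz1X).
rewrite !big_cons big_nil addr0 !mulrDl -!mulrA !qfE.
rewrite /gt /Ltot.
have [h1|h1|h1] := ltngtP (rk E) (rk D); last by move/rk_inj: h1.
all: have [h2|h2|h2] := ltngtP (rk D) (rk N); last by move/rk_inj: h2.
all: have [h3|h3|h3] := ltngtP (rk E) (rk N); last by move/rk_inj: h3.
all: try (exfalso; lia).
all: case: c; rewrite ?ltnn ?h1 ?h2 ?h3 ?(flipF h1) ?(flipF h2) ?(flipF h3) /=.
all: rewrite ?addn0 ?add0n ?expr0 !exprD; ring.

Qed.

Definition H rk n k c := Hp rk n k c (fun _ => true).
Definition Bd rk n k c := Hp rk n k c goes_above.
Definition sh (k : step -> nat) : step -> nat :=
  fun s => if s == E then (k E).+1 else if s == N then (k N).-1 else k s.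

Lemma H_rec rk n k c : H rk n.+1 k c =
  if (0 < k c)%N then
    \sum_(c' <- steps) (if (rk c < rk c')%N then 'X^n else 1) * H rk n (dec k c) c'
  else 0.
Proof. by apply: Hp_rec. Qed.

Lemma Bd_rec rk n k c : (k N <= k E)%N -> Bd rk n.+1 k c =
  if (0 < k c)%N then
    \sum_(c' <- steps) (if (rk c < rk c')%N then 'X^n else 1) * Bd rk n (dec k c) c'
  else 0.
Proof.
move=> hle; apply: Hp_rec => w c0 h.
by rewrite goes_above_rcons (not_above_end _ _ h hle) orbF.
Qed.

Lemma Hp0 rk k c P :
  Hp rk 0 k c P = if [&& cont k [::], E == c & P [::]] then 1 else 0.
Proof.
by rewrite /Hp /= big_cons big_nil; case: ifP; rewrite ?addr0 // /maj big_ord0 expr0.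
Qed.

Lemma Hp_ext rk n k1 k2 c P : k1 =1 k2 -> Hp rk n k1 c P = Hp rk n k2 c P.
Proof. by move=> h; apply: eq_bigl => w; rewrite /cont !h. Qed.

Lemma Ltot_dec {k c} : (0 < k c)%N -> Ltot (dec k c) = (Ltot k).-1.
Proof. by case: c; rewrite /Ltot /dec !stepE; lia. Qed.

Lemma Pi_dec {k c} : (0 < k c)%N -> Pi k = Pi (dec k c) * qf (k c).
Proof.
rewrite /Pi /dec; case: c; rewrite !stepE.
- by case: (k E) => // m _ /=; ring.
- by case: (k D) => // m _ /=; ring.
- by case: (k N) => // m _ /=; ring.
Qed.

Lemma gt_dec rk k c : gt rk (dec k c) c = gt rk k c.
Proof. by rewrite /gt /dec; case: c; rewrite !stepE ltnn. Qed.

Lemma LL rk (rk_inj : injective rk) n : forall k c, Ltot k = n.+1 ->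
  H rk n.+1 k c * Pi k = 'X^(gt rk k c) * qf (k c) * qfact n.
Proof.
elim: n => [|n IH] k c hL; rewrite H_rec.
  case: (posnP (k c)) => hk; first by rewrite hk mul0r /= mulr0 mul0r.
  rewrite !big_cons big_nil /H !Hp0 /cont /dec /Pi /gt.
  case: c hk hL; rewrite /Ltot => hk hL.
  - have [e1 e2 e3] : [/\ k E = 1, k D = 0 & k N = 0]%N by split; lia.
    by rewrite !stepE e1 e2 e3 /= ltnn !if_same; ring.
  - have [e1 e2 e3] : [/\ k E = 0, k D = 1 & k N = 0]%N by split; lia.
    by rewrite !stepE e1 e2 e3 /= ltnn !if_same; ring.
  - have [e1 e2 e3] : [/\ k E = 0, k D = 0 & k N = 1]%N by split; lia.
    by rewrite !stepE e1 e2 e3 /= ltnn !if_same; ring.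
case: (posnP (k c)) => hk; first by rewrite hk mul0r /= mulr0 mul0r.
have hb : Ltot (dec k c) = n.+1 by rewrite Ltot_dec // hL.
rewrite (Pi_dec hk) mulr_suml.
transitivity ((\sum_(c' <- steps) (if (rk c < rk c')%N then 'X^(n.+1) else 1) *
   ('X^(gt rk (dec k c) c') * qf (dec k c c'))) * qfact n * qf (k c)).
  rewrite !mulr_suml; apply: eq_bigr => c' _.
  have e : forall a b c d : {poly int}, (a * b) * (c * d) = a * (b * c) * d.
    by move=> *; ring.
  by rewrite e IH // !mulrA.
have := @KI rk rk_inj (dec k c) c; rewrite hb gt_dec => ->.
by rewrite -[qfact n.+1]/(qfact n * qf n.+1); ring.
Qed.

Lemma HS rk (rk_inj : injective rk) n k : Ltot k = n.+1 -> k E = k N ->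
  (0 < k N)%N -> H rk n.+1 k E = 'X^((rk E < rk N)%N) * H rk n.+1 (sh k) E.
Proof.
move=> hL hEN hN.
have hL' : Ltot (sh k) = n.+1 by move: hL; rewrite /Ltot /sh !stepE /=; lia.
have L1 := @LL rk rk_inj n k E hL; have L2 := @LL rk rk_inj n (sh k) E hL'.
have hPi : Pi (sh k) * qf (k N) = Pi k * qf (k N).+1.
  rewrite /Pi /sh !stepE /= hEN; case: (k N) hN => // m _ /=; ring.
have hg : gt rk k E = (gt rk (sh k) E + (rk E < rk N)%N)%N.
  rewrite /gt /sh !stepE ltnn /=.
  by case: (rk E < rk N)%N; case: (rk E < rk D)%N => /=; lia.
have shE : sh k E = (k E).+1 by rewrite /sh stepE.
apply: (mulIf (mulf_neq0 (Pi_nz k) (qf_nz _ (ltn0Sn (k N))))).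
rewrite -[in RHS]hPi.
have -> : H rk n.+1 k E * (Pi k * qf (k N).+1) =
          (H rk n.+1 k E * Pi k) * qf (k N).+1 by ring.
have -> : 'X^((rk E < rk N)%N) * H rk n.+1 (sh k) E * (Pi (sh k) * qf (k N)) =
   'X^((rk E < rk N)%N) * (H rk n.+1 (sh k) E * Pi (sh k)) * qf (k N) by ring.
rewrite L1 L2 shE hEN hg exprD; ring.
Qed.

Lemma Bd_noN rk n k c : k N = 0%N -> Bd rk n k c = 0.
Proof.
move=> h; apply: big1 => w /and3P [/and3P [_ _ /eqP hc] _ ha].
by move: ha; rewrite (negbTE (noN w (etrans hc h))).
Qed.

Lemma Bd_all rk n k c : (k E < k N)%N -> Bd rk n k c = H rk n k c.
Proof.
move=> h; apply: eq_bigl => w.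
by case hc: (cont k w) => //=; rewrite (above_end _ _ hc h) !andbT.
Qed.

Lemma lift_step rk n k c :
  (k N <= k E)%N -> (0 < k c)%N = (0 < sh k c)%N ->
  ((0 < k c)%N -> forall c', Bd rk n (dec k c) c' = 'X^((rk E < rk N)%N) * H rk n (dec (sh k) c) c') ->
  Bd rk n.+1 k c = 'X^((rk E < rk N)%N) * H rk n.+1 (sh k) c.
Proof.
move=> hle hpos hyp; rewrite (Bd_rec _ _ _ _ hle) H_rec hpos.
case: ifP => hk; last by rewrite mulr0.
rewrite mulr_sumr; apply: eq_bigr => c' _; rewrite hyp; last by rewrite hpos.
by rewrite mulrCA.
Qed.

Lemma BC rk (rk_inj : injective rk) n : forall k c, Ltot k = n ->
  (k N <= k E)%N -> (0 < k N)%N ->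
  Bd rk n k c = 'X^((rk E < rk N)%N) * H rk n (sh k) c.
Proof.
elim: n => [|n IH] k c hL hle hN; first by move: hL; rewrite /Ltot; lia.
case: c.
- case: (ltngtP (k N) (k E)) => hc; last first.
  + rewrite -(@HS rk rk_inj n k hL (esym hc) hN).
    rewrite (Bd_rec _ _ _ _ hle) H_rec.
    case: ifP => _ //; apply: eq_bigr => c' _; rewrite Bd_all //.
    by rewrite /dec !stepE; lia.
  + by move: hle; rewrite leqNgt hc.
  apply: lift_step => //; first by rewrite /sh stepE; lia.
  move=> _ c'; rewrite IH; first last.
  * by rewrite /dec !stepE.
  * by rewrite /dec !stepE; lia.
  * by rewrite Ltot_dec ?hL //; lia.
  by congr (_ * _); apply: Hp_ext => s; rewrite /sh /dec; case: s; rewrite !stepE //=; lia.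
- apply: lift_step => //; first by rewrite /sh !stepE.
  move=> hD c'; rewrite IH; first last.
  * by rewrite /dec !stepE.
  * by rewrite /dec !stepE.
  * by rewrite Ltot_dec ?hL.
  by congr (_ * _); apply: Hp_ext => s; rewrite /sh /dec; case: s; rewrite !stepE.
- case: (ltngtP (k N) 1) => h1.
  + by move: hN; rewrite lt0n; lia.
  + apply: lift_step => //; first by rewrite /sh !stepE; lia.
    move=> _ c'; rewrite IH; first last.
    * by rewrite /dec !stepE; lia.
    * by rewrite /dec !stepE; lia.
    * by rewrite Ltot_dec ?hL //; lia.
    by congr (_ * _); apply: Hp_ext => s; rewrite /sh /dec; case: s; rewrite !stepE.
  + rewrite (Bd_rec _ _ _ _ hle) H_rec /sh !stepE h1 /=.
    rewrite mulr0 big1 // => c' _; rewrite Bd_noN ?mulr0 //.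
    by rewrite /dec !stepE h1.
Qed.

Lemma tuple_words l (P : pred (seq step)) (F : seq step -> {poly int}) :
  \sum_(W : l.-tuple step | P W) F W = \sum_(w <- words l | P w) F w.
Proof.
rewrite -[LHS](big_map val P F); apply: perm_big; apply: uniq_perm.
- by rewrite map_inj_uniq ?index_enum_uniq //; exact: val_inj.
- exact: uniq_words.
move=> w; rewrite mem_words; apply/mapP/idP => [[W _ ->]|h].
  by rewrite size_tuple.
by exists (Tuple h) => //; rewrite mem_index_enum.
Qed.

Definition k0 (n l : nat) : step -> nat :=
  fun s => if s == D then (n + n - l)%N else (l - n)%N.

Lemma predL n l w : size w = l -> (n < l)%N -> (l <= n + n)%N ->
  ((xcoord w == n) && (ycoord w == n)) = cont (k0 n l) w.
Proof.
rewrite /cont /k0 !stepE xcoord_cnt ycoord_cnt size_cnt => hs h1 h2.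
apply/idP/idP => [/andP [/eqP a /eqP b]|/and3P [/eqP a /eqP b /eqP c]].
  by apply/and3P; split; apply/eqP; lia.
by apply/andP; split; apply/eqP; lia.
Qed.

Lemma predR n l w : size w = l -> (n < l)%N -> (l <= n + n)%N ->
  ((xcoord w == n.+1) && (ycoord w == n.-1)) = cont (sh (k0 n l)) w.
Proof.
rewrite /cont /sh /k0 !stepE xcoord_cnt ycoord_cnt size_cnt => hs h1 h2.
apply/idP/idP => [/andP [/eqP a /eqP b]|/and3P [/eqP a /eqP b /eqP c]].
  by apply/and3P; split; apply/eqP; lia.
by apply/andP; split; apply/eqP; lia.
Qed.

Lemma main_words rk (rk_inj : injective rk) n l : (1 <= n)%N ->
  (\sum_(w <- words l | [&& xcoord w == n, ycoord w == n & goes_above w])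
     'X^(maj rk w) : {poly int}) =
  'X^((rk E < rk N)%N) *
  \sum_(w <- words l | (xcoord w == n.+1) && (ycoord w == n.-1)) 'X^(maj rk w).
Proof.
move=> hn.
case: (ltnP n l) => h1; last first.
  rewrite big1_seq; last first.
    move=> w /andP [/and3P [/eqP a /eqP b c] hw].
    move: hw c; rewrite mem_words => /eqP hs.
    have hN : count_mem N w = 0%N.
      by move: a b hs; rewrite xcoord_cnt ycoord_cnt size_cnt; lia.
    by rewrite (negbTE (noN w hN)).
  rewrite big1_seq ?mulr0 //.
  move=> w /andP [/andP [/eqP a /eqP b] hw].
  move: hw; rewrite mem_words => /eqP hs.
  by move: a b hs; rewrite -subn1 xcoord_cnt ycoord_cnt size_cnt; lia.
case: (leqP l (n + n)) => h2; last first.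
  rewrite big1_seq; last first.
    move=> w /andP [/and3P [/eqP a /eqP b c] hw].
    move: hw; rewrite mem_words => /eqP hs.
    by move: a b hs; rewrite xcoord_cnt ycoord_cnt size_cnt; lia.
  rewrite big1_seq ?mulr0 //.
  move=> w /andP [/andP [/eqP a /eqP b] hw].
  move: hw; rewrite mem_words => /eqP hs.
  by move: a b hs; rewrite -subn1 xcoord_cnt ycoord_cnt size_cnt; lia.
have hL : Ltot (k0 n l) = l by rewrite /Ltot /k0 !stepE; lia.
transitivity (\sum_(c' <- steps) Bd rk l (k0 n l) c').
  rewrite big_seq_cond.
  rewrite (eq_bigl (fun w => (w \in words l) && (cont (k0 n l) w && goes_above w))); last first.
    move=> w; case hw: (w \in words l) => //=.
    have hs : size w = l by apply/eqP; rewrite -mem_words.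
    by rewrite andbA (predL _ _ _ hs h1 h2).
  rewrite -big_seq_cond split_last; apply: eq_bigr => c' _.
  by apply: eq_bigl => w; rewrite /=; case: (cont _ w); case: (goes_above w);
    case: (last E w == c').
transitivity ('X^((rk E < rk N)%N) * \sum_(c' <- steps) H rk l (sh (k0 n l)) c').
  rewrite mulr_sumr; apply: eq_bigr => c' _; apply: (@BC rk rk_inj l (k0 n l) c' hL).
    by rewrite /k0 !stepE.
  by rewrite /k0 !stepE; lia.
congr (_ * _).
rewrite [RHS]big_seq_cond.
rewrite (eq_bigl (fun w => (w \in words l) && cont (sh (k0 n l)) w)); last first.
  move=> w; case hw: (w \in words l) => //=.
  have hs : size w = l by apply/eqP; rewrite -mem_words.
  by rewrite (predR _ _ _ hs h1 h2).
rewrite -big_seq_cond split_last; apply: eq_bigr => c' _.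
by apply: eq_bigl => w; rewrite /= andbT.
Qed.

Theorem lemma2p1 (rk : step -> nat) (rk_inj : injective rk) (n l : nat)
    (hn : (1 <= n)%N) :
  ((rk E < rk N)%N ->
     (\sum_(W in BDel n l) 'X^(maj rk W) : {poly int})
     = 'X * \sum_(W in Del n.+1 n.-1 l) 'X^(maj rk W))
  /\
  ((rk N < rk E)%N ->
     (\sum_(W in BDel n l) 'X^(maj rk W) : {poly int})
     = \sum_(W in Del n.+1 n.-1 l) 'X^(maj rk W)).
Proof.
have e : (\sum_(W in BDel n l) 'X^(maj rk W) : {poly int})
     = 'X^((rk E < rk N)%N) * \sum_(W in Del n.+1 n.-1 l) 'X^(maj rk W).
  rewrite [in LHS](eq_bigl (fun W : l.-tuple step =>
     [&& xcoord W == n, ycoord W == n & goes_above W])); last first.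
    by move=> W; rewrite !inE andbA.
  rewrite [in RHS](eq_bigl (fun W : l.-tuple step =>
     (xcoord W == n.+1) && (ycoord W == n.-1))); last first.
    by move=> W; rewrite !inE.
  have t1 := tuple_words l (fun w => [&& xcoord w == n, ycoord w == n & goes_above w])
    (fun w => 'X^(maj rk w)).
  have t2 := tuple_words l (fun w => (xcoord w == n.+1) && (ycoord w == n.-1))
    (fun w => 'X^(maj rk w)).
  simpl in t1, t2; rewrite t1 t2.
  exact: main_words.
split => h; rewrite e.
  by rewrite h expr1.
by rewrite (flipF h) expr0 mul1r.
Qed.
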